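(* For every integer $n\ge 2$, the shift graph $S_n$ has symmetric difference at most $2$.
   Context: The shift graph $S_n$ has vertex set $\{(i,j): 1\le i<j\le n\}$, with $(i,j)$ adjacent to $(k,\ell)$ whenever $j=k$ or $i=\ell$. For a graph $G$ and distinct vertices $u,v$, $\mathrm{sd}_G(u,v) := |(N_G(u)\setminus\{v\}) \triangle (N_G(v)\setminus\{u\})|$. The symmetric difference of $G$ is $\max_H\min_{u\ne v\in V(H)}\mathrm{sd}_H(u,v)$, with $H$ ranging over induced subgraphs of $G$ having at least two vertices. *)

(* Defs.v *)
From mathcomp Require Import all_boot.
Set Implicit Arguments. Unset Strict Implicit. Unset Printing Implicit Defensive.

(* Vertices of the shift graph S_n: pairs (i,j) with 1 <= i < j <= n,
   encoded 0-based as i j : 'I_n with i < j. *)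
Definition shift_vertex (n : nat) := {p : 'I_n * 'I_n | p.1 < p.2}.

Definition shift_adj (n : nat) : rel (shift_vertex n) :=
  fun u v => ((val u).2 == (val v).1) || ((val u).1 == (val v).2).

Definition nbhd (T : finType) (adj : rel T) (X : {set T}) (u : T) : {set T} :=
  [set w in X | adj u w].

Definition sd (T : finType) (adj : rel T) (X : {set T}) (u v : T) : nat :=
  let A := nbhd adj X u :\ v in
  let B := nbhd adj X v :\ u in
  #|(A :\: B) :|: (B :\: A)|.

(* symmetric difference of G is at most k:
   max over induced subgraphs H with >= 2 vertices of
   min over distinct u v in H of sd_H(u,v) is <= k, i.e. every such H
   has two distinct vertices u, v with sd_H(u,v) <= k. *)
Definition sym_diff_at_most (T : finType) (adj : rel T) (k : nat) : Prop :=
  forall X : {set T}, 2 <= #|X| ->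
    exists u v, [/\ u \in X, v \in X, u != v & sd adj X u v <= k].

(* Main.v *)
Require Import Defs.
From mathcomp Require Import all_boot.
From Stdlib Require Import Classical.
From mathcomp Require Import zify.
Set Implicit Arguments. Unset Strict Implicit. Unset Printing Implicit Defensive.

Definition arel (T : finType) (s t : T -> nat) : rel T :=
  fun u v => (t u == s v) || (s u == t v).
Definition Inc (T : finType) (t : T -> nat) (X : {set T}) (x : nat) : {set T} :=
  [set w in X | t w == x].

Lemma cardU_le (T : finType) (A B : {set T}) : #|A :|: B| <= #|A| + #|B|.
Proof. by rewrite cardsU leq_subr. Qed.

Lemma sd_bound (T : finType) (adj : rel T) (X : {set T}) u v (S1 S2 : {set T}) :
  (forall w, w \in X -> adj u w -> w != v -> ~~ (adj v w && (w != u)) -> w \in S1) ->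
  (forall w, w \in X -> adj v w -> w != u -> ~~ (adj u w && (w != v)) -> w \in S2) ->
  sd adj X u v <= #|S1| + #|S2|.
Proof.
move=> h1 h2; rewrite /sd /nbhd.
apply: (@leq_trans #|S1 :|: S2|); last exact: cardU_le.
idtac.
apply: subset_leq_card; apply/subsetP => w.
rewrite !inE; case/orP => /and3P [Hn Hd Hx].
- move/andP: Hx => [Hx Ha]; apply/orP; left; apply: h1 => //.
  by apply: contra Hn => /andP [a b]; rewrite b Hx a.
- move/andP: Hx => [Hx Ha]; apply/orP; right; apply: h2 => //.
  by apply: contra Hn => /andP [a b]; rewrite b Hx a.
Qed.

Lemma le1_in (T : finType) (A : {set T}) x y : #|A| <= 1 -> x \in A -> y \in A -> y = x.
Proof. by move/card_le1P => h hx hy; have := h x hx y; rewrite hy => /esym/eqP. Qed.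

Lemma lemA (T : finType) (s t : T -> nat) (hst : forall u, s u < t u) (X : {set T}) x :
  2 <= #|Inc t X x| ->
  exists u v, [/\ u \in X, v \in X, u != v & sd (arel s t) X u v <= 2].
Proof.
move=> hx.
have exP : exists x, 2 <= #|Inc t X x| by exists x.
case: (ex_minnP exP) => m hm hmin.
have hlow : forall y, y < m -> #|Inc t X y| <= 1.
  by move=> y hy; rewrite leqNgt; apply/negP => /hmin; rewrite leqNgt hy.
case/card_gt1P: hm => u [v [hu hv huv]].
move: hu hv; rewrite !inE => /andP [hu /eqP tu] /andP [hv /eqP tv].
exists u, v; split => //.
apply: (@leq_trans (#|Inc t X (s u)| + #|Inc t X (s v)|)); last first.
  by rewrite -[2]/(1+1); apply: leq_add; apply: hlow; [rewrite -tu | rewrite -tv]; exact: hst.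
apply: sd_bound => w hw.
- rewrite /arel => /orP [/eqP e|/eqP e] hwv.
  + rewrite negb_and negbK => /orP [] h.
    * by move: h; rewrite tv -tu e eqxx.
    * by move/eqP: h e => -> e; have := hst u; rewrite e ltnn.
  + by rewrite inE hw -e eqxx.
- rewrite /arel => /orP [/eqP e|/eqP e] hwv.
  + rewrite negb_and negbK => /orP [] h.
    * by move: h; rewrite tu -tv e eqxx.
    * by move/eqP: h e => -> e; have := hst v; rewrite e ltnn.
  + by rewrite inE hw -e eqxx.
Qed.

Lemma lemD (T : finType) (s t : T -> nat) (hst : forall u, s u < t u) (X : {set T}) :
  1 < #|X| -> (forall x, #|Inc t X x| <= 1) -> (forall x, #|Inc s X x| <= 1) ->
  exists u v, [/\ u \in X, v \in X, u != v & sd (arel s t) X u v <= 2].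
Proof.
move=> h2 hin hout.
case/card_gt1P: (h2) => a [b [ha hb hab]].
have exP : exists k, [exists w in X, s w == k] by exists (s a); apply/exists_inP; exists a.
case: (ex_minnP exP) => m /exists_inP [u hu /eqP su] hmin.
have hc : forall w, w \in X -> s u = t w -> False.
  move=> w hw e; have := hst w; rewrite -e su.
  have : m <= s w by apply: hmin; apply/exists_inP; exists w.
  by move=> h1 h3; have := leq_trans h3 h1; rewrite ltnn.
case: (set_0Vmem (Inc s X (t u))) => [h0 | [v hv]].
- have [v [hv hvu]] : exists v, v \in X /\ v != u.
    case: (eqVneq a u) => [e|e]; last by exists a.
    by exists b; split => //; rewrite -e eq_sym.
  exists u, v; split => //; first by rewrite eq_sym.
  apply: (@leq_trans (#|@set0 T| + #|Inc s X (t v) :|: Inc t X (s v)|)).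
    apply: sd_bound => w hw.
    + rewrite /arel => /orP [/eqP e|/eqP e] _ _.
      * have : w \in Inc s X (t u) by rewrite inE hw e eqxx.
        by rewrite h0 inE.
      * by case: (hc w hw e).
    + rewrite /arel => /orP [/eqP e|/eqP e] _ _; rewrite inE.
      * by rewrite inE hw -e eqxx.
      * by rewrite !inE hw -e eqxx orbT.
  rewrite cards0 add0n; apply: leq_trans (cardU_le _ _) _.
  by rewrite -[2]/(1+1); apply: leq_add.
- move: (hv); rewrite inE => /andP [hvX /eqP sv].
  have hvu : v != u.
    by apply/eqP => e; have := hst u; rewrite -sv e ltnn.
  exists u, v; split => //; first by rewrite eq_sym.
  apply: (@leq_trans (#|Inc s X (t u) :\ v| + #|Inc s X (t v) :|: (Inc t X (t u) :\ u)|)).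
    apply: sd_bound => w hw.
    + rewrite /arel => /orP [/eqP e|/eqP e] hwv _.
      * by rewrite !inE hwv hw e eqxx.
      * by case: (hc w hw e).
    + rewrite /arel => /orP [/eqP e|/eqP e] hwu _; rewrite inE.
      * by rewrite inE hw -e eqxx.
      * by rewrite !inE hwu hw -e sv eqxx orbT.
  have e1 : #|Inc s X (t u) :\ v| = 0.
    by have := hout (t u); rewrite (cardsD1 v) hv add1n ltnS leqn0 => /eqP.
  have e2 : #|Inc t X (t u) :\ u| = 0.
    have hu' : u \in Inc t X (t u) by rewrite inE hu eqxx.
    by have := hin (t u); rewrite (cardsD1 u) hu' add1n ltnS leqn0 => /eqP.
  rewrite e1 add0n; apply: leq_trans (cardU_le _ _) _.
  by rewrite e2 addn0 (leq_trans (hout _)).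
Qed.

Lemma sd_ext (T : finType) (a1 a2 : rel T) X u v :
  a1 =2 a2 -> sd a1 X u v = sd a2 X u v.
Proof.
move=> h; rewrite /sd /nbhd.
have H : forall x, [set w in X | a1 x w] = [set w in X | a2 x w].
  by move=> x; apply/setP => w; rewrite !inE h.
by rewrite (H u) (H v).
Qed.

Theorem mainTheorem12 (n : nat) : 2 <= n -> sym_diff_at_most (@shift_adj n) 2.
Proof.
move=> hn X hX.
pose s := fun u : shift_vertex n => nat_of_ord (val u).1.
pose t := fun u : shift_vertex n => nat_of_ord (val u).2.
have hst : forall u, s u < t u by move=> u; exact: (valP u).
have htn : forall u, t u < n by move=> u; exact: ltn_ord.
have eadj : (@shift_adj n) =2 arel s t by [].
have esd : forall u v, sd (@shift_adj n) X u v = sd (arel s t) X u v.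
  by move=> u v; apply: sd_ext.
have conv : (exists u v, [/\ u \in X, v \in X, u != v & sd (arel s t) X u v <= 2]) ->
   exists u v, [/\ u \in X, v \in X, u != v & sd (@shift_adj n) X u v <= 2].
  by move=> [u [v [a b c d]]]; exists u, v; rewrite esd.
apply: conv.
case: (classic (exists x, 2 <= #|Inc t X x|)) => [[x hx]|nin].
  exact: lemA hx.
case: (classic (exists x, 2 <= #|Inc s X x|)) => [[x hx]|nout].
  pose s' := fun u => n - t u.
  pose t' := fun u => n - s u.
  have hst' : forall u, s' u < t' u.
    move=> u; rewrite /s' /t'; have := hst u; have := htn u.
    move=> h1 h2; lia.
  have e : arel s' t' =2 arel s t.
    move=> u v; rewrite /arel /s' /t'.
    rewrite !eqn_sub2lE ?(ltnW (htn _)) ?(ltnW (leq_ltn_trans (ltnW (hst _)) (htn _))) //.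
    by rewrite orbC eq_sym; congr (_ || _); rewrite eq_sym.
  have hx' : 2 <= #|Inc t' X (n - x)|.
    apply: leq_trans hx _; apply: subset_leq_card; apply/subsetP => w.
    by rewrite !inE => /andP [hw /eqP ee]; rewrite hw /t' ee eqxx.
  have [u [v [a b c d]]] := lemA hst' hx'.
  by exists u, v; rewrite -(sd_ext _ _ _ e).
apply: lemD => // x; rewrite leqNgt; apply/negP => h.
  by apply: nin; exists x.
by apply: nout; exists x.
Qed.
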